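(* Let $\mathfrak L_1,\dots,\mathfrak L_n,\mathfrak L$ be complete lattices, let $(\mathcal F_\alpha)_{\alpha\in\mathcal O}$ with $\mathcal F_\alpha:\mathfrak L_1\times\dots\times\mathfrak L_n\to(\mathfrak L\to^+\mathfrak L)$ be a family that is $\liminf$-pullable in all arguments, and let $\phi:\mathcal O\to\mathcal O$ be monotone. Then for every nonzero limit ordinal $\lambda\in\mathcal O$ and all $\mathcal G_i:\mathcal O\to\mathfrak L_i$ ($i=1,\dots,n$), $$\mu^{\liminf_\lambda\phi}\big(\mathcal F_\lambda(\liminf_\lambda\vec{\mathcal G})\big)\sqsubseteq\liminf_{\alpha\to\lambda}\mu^{\phi(\alpha)}\big(\mathcal F_\alpha(\vec{\mathcal G}_\alpha)\big).$$ If moreover $\phi$ is lower semi-continuous (i.e. $\phi(\lambda)\le\liminf_\lambda\phi$ for all nonzero limits $\lambda$), then even $$\mu^{\phi(\lambda)}\big(\mathcal F_\lambda(\liminf_\lambda\vec{\mathcal G})\big)\sqsubseteq\liminf_{\alpha\to\lambda}\mu^{\phi(\alpha)}\big(\mathcal F_\alpha(\vec{\mathcal G}_\alpha)\big).$$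
   Context: $\mathcal O$ is the set of ordinals $\le\top_{\mathsf{ord}}$ for a fixed ordinal $\top_{\mathsf{ord}}$ ($=\beth_\omega$). For $g:\mathcal O\to\mathfrak L$ into a complete lattice and a nonzero limit $\lambda$: $\liminf_\lambda g=\liminf_{\alpha\to\lambda}g(\alpha)=\sup_{\alpha_0<\lambda}\inf_{\alpha_0\le\alpha<\lambda}g(\alpha)$, $\limsup_{\alpha\to\lambda}g(\alpha)=\inf_{\alpha_0<\lambda}\sup_{\alpha_0\le\alpha<\lambda}g(\alpha)$; on products, componentwise. $\mathfrak L\to^+\mathfrak L$ = monotone maps. For $f:\mathfrak L\to\mathfrak L$, $g\in\mathfrak L$: $f^0(g)=g$, $f^{\alpha+1}(g)=f(f^\alpha(g))$, $f^\lambda(g)=\limsup_{\alpha\to\lambda}f^\alpha(g)$; $\mu^\alpha f:=f^\alpha(\bot)$. A family $(\mathcal F_\alpha)_{\alpha\in\mathcal O}$ of maps $\mathfrak K\to\mathfrak K'$ is $\liminf$-pullable if for all $\mathcal G:\mathcal O\to\mathfrak K$ and nonzero limits $\lambda$: $\mathcal F_\gamma(\liminf_{\alpha\to\lambda}\mathcal G_\alpha)\sqsubseteq\liminf_{\alpha\to\lambda}\mathcal F_\gamma(\mathcal G_\alpha)$ for all $\gamma\in\mathcal O$, and $\mathcal F_\lambda(\liminf_{\alpha\to\lambda}\mathcal G_\alpha)\sqsubseteq\liminf_{\alpha\to\lambda}\mathcal F_\alpha(\mathcal G_\alpha)$. ''$\liminf$-pullable in all arguments'' means the family $(\vec{\mathcal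 G},\mathcal X)\mapsto\mathcal F_\alpha(\vec{\mathcal G})(\mathcal X)$ is $\liminf$-pullable. *)

(* Defs.v *)
From Stdlib Require Import ClassicalEpsilon.
From mathcomp Require Import all_boot.

Set Implicit Arguments.
Unset Strict Implicit.
Unset Printing Implicit Defensive.

Record clat := CLat {
  car :> Type;
  cle : car -> car -> Prop;
  csup : (car -> Prop) -> car;
  cinf : (car -> Prop) -> car;
  cle_refl : forall x, cle x x;
  cle_trans : forall x y z, cle x y -> cle y z -> cle x z;
  cle_anti : forall x y, cle x y -> cle y x -> x = y;
  csup_ub : forall (S : car -> Prop) x, S x -> cle x (csup S);
  csup_least : forall (S : car -> Prop) y, (forall x, S x -> cle x y) -> cle (csup S) y;
  cinf_lb : forall (S : car -> Prop) x, S x -> cle (cinf S) x;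
  cinf_greatest : forall (S : car -> Prop) y, (forall x, S x -> cle y x) -> cle y (cinf S)
}.
Arguments cle {c} _ _.
Arguments csup {c} _.
Arguments cinf {c} _.

Definition cbot (L : clat) : L := csup (fun _ : L => False).

(** The ordinal range O = {ordinals <= top}: modelled as a complete lattice
    whose order is total and whose strict part is well-founded
    (i.e. a well-order with a greatest element; every such order is
    isomorphic to the set of ordinals <= some ordinal). *)
Record wclat := WCLat {
  wl :> clat;
  wtotal : forall x y : wl, cle x y \/ cle y x;
  wwf : well_founded (fun x y : wl => cle x y /\ x <> y)
}.

Definition olt {O : wclat} (a b : O) : Prop := cle a b /\ a <> b.

Definition is_pred {O : wclat} (b a : O) : Prop :=
  olt b a /\ forall c, olt c a -> cle c b.

Definition is_nz_limit {O : wclat} (lam : O) : Prop :=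
  (exists b, olt b lam) /\ forall b, olt b lam -> exists c, olt b c /\ olt c lam.

Definition liminf {O : wclat} {L : clat} (g : O -> L) (lam : O) : L :=
  csup (fun x => exists a0, olt a0 lam /\
          x = cinf (fun y => exists a, cle a0 a /\ olt a lam /\ y = g a)).

(** Transfinite iteration f^a(g):
    f^0 g = g, f^(b+1) g = f (f^b g), f^lam g = limsup_{b -> lam} f^b g. *)
Definition iter_body (O : wclat) (L : clat) (f : L -> L) (g : L)
    (a : O) (rec : forall b : O, olt b a -> L) : L :=
  match excluded_middle_informative (exists b, olt b a) with
  | right _ => g
  | left _ =>
    match excluded_middle_informative (exists b, is_pred b a) with
    | left H =>
        let (b, Hb) := constructive_indefinite_description _ H in
        f (rec b (proj1 Hb))
    | right _ =>
        cinf (fun x => exists a0, olt a0 a /\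
          x = csup (fun y => exists b (hb : olt b a), cle a0 b /\ y = rec b hb))
    end
  end.

Definition titer (O : wclat) (L : clat) (f : L -> L) (g : L) : O -> L :=
  Fix (@wwf O) (fun _ => L) (@iter_body O L f g).

Definition mu {O : wclat} {L : clat} (a : O) (f : L -> L) : L :=
  @titer O L f (cbot L) a.

Definition monotone_map (L : clat) (f : L -> L) : Prop :=
  forall x y, cle x y -> cle (f x) (f y).

Definition liminf_pullable_all {O : wclat} {n : nat} {Ls : 'I_n -> clat}
    {L : clat} (F : O -> (forall i, Ls i) -> L -> L) : Prop :=
  forall (G : O -> forall i, Ls i) (X : O -> L) (lam : O), is_nz_limit lam ->
    (forall gam : O,
       cle (F gam (fun i => liminf (fun a => G a i) lam) (liminf X lam))
           (liminf (fun a => F gam (G a) (X a)) lam)) /\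
    cle (F lam (fun i => liminf (fun a => G a i) lam) (liminf X lam))
        (liminf (fun a => F a (G a) (X a)) lam).

(* Main.v *)
Require Import Defs.
From Stdlib Require Import ClassicalEpsilon.
From mathcomp Require Import all_boot.
From Stdlib Require Import Classical FunctionalExtensionality.
Set Implicit Arguments.
Unset Strict Implicit.

Lemma titer_eq (O : wclat) (L : clat) (f : L -> L) (g : L) (a : O) :
  @titer O L f g a = @iter_body O L f g a (fun b _ => @titer O L f g b).
Proof.
  unfold titer. apply (Fix_eq (@wwf O) (fun _ => L) (@iter_body O L f g)). intros x h1 h2 E.
  assert (h1 = h2) as ->; [|reflexivity].
  apply functional_extensionality_dep; intro b;
  apply functional_extensionality_dep; intro hb; apply E.
Qed.

Lemma titer_zero (O : wclat) (L : clat) (f : L -> L) (g : L) (a : O) :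
  ~ (exists b, olt b a) -> @titer O L f g a = g.
Proof.
  intro Hz. rewrite titer_eq. unfold iter_body.
  destruct (excluded_middle_informative _); [contradiction|reflexivity].
Qed.

Lemma pred_uniq (O : wclat) (a b b' : O) : is_pred b a -> is_pred b' a -> b = b'.
Proof.
  intros H H'. apply cle_anti; [apply (proj2 H' b (proj1 H)) | apply (proj2 H b' (proj1 H'))].
Qed.

Lemma titer_succ (O : wclat) (L : clat) (f : L -> L) (g : L) (a b : O) :
  is_pred b a -> @titer O L f g a = f (@titer O L f g b).
Proof.
  intro Hb. rewrite titer_eq. unfold iter_body.
  destruct (excluded_middle_informative _) as [_|n];
    [|exfalso; apply n; exists b; apply (proj1 Hb)].
  destruct (excluded_middle_informative _) as [H'|n]; [|exfalso; apply n; exists b; exact Hb].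
  destruct (constructive_indefinite_description _ H') as [b' Hb'].
  rewrite (pred_uniq Hb' Hb). reflexivity.
Qed.

Definition tail_sup (O : wclat) (L : clat) (f : L -> L) (g : L) (a a0 : O) : L :=
  csup (fun y => exists b (hb : olt b a), cle a0 b /\ y = @titer O L f g b).

Lemma titer_lim (O : wclat) (L : clat) (f : L -> L) (g : L) (a : O) :
  (exists b, olt b a) -> ~ (exists b, is_pred b a) ->
  @titer O L f g a = cinf (fun x => exists a0, olt a0 a /\ x = tail_sup f g a a0).
Proof.
  intros Hne Hnp. rewrite titer_eq. unfold iter_body.
  destruct (excluded_middle_informative _) as [_|n]; [|contradiction].
  destruct (excluded_middle_informative _) as [H'|n]; [contradiction|reflexivity].
Qed.

Lemma bot_le (L : clat) (x : L) : cle (cbot L) x.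
Proof. unfold cbot. apply csup_least. tauto. Qed.

Lemma titer_mono (O : wclat) (L : clat) (f : L -> L) (fm : monotone_map f) :
  forall b : O, (forall a, cle a b -> cle (@titer O L f (cbot L) a) (@titer O L f (cbot L) b))
     /\ cle (@titer O L f (cbot L) b) (f (@titer O L f (cbot L) b)).
Proof.
  apply (well_founded_ind (@wwf O)). intros b IH.
  destruct (classic (exists c, olt c b)) as [Hne|Hz].
  - destruct (classic (exists d, is_pred d b)) as [[d Hd]|Hnp].
    + destruct (IH d (proj1 Hd)) as [IHa IHf]. split.
      * intros a Hab. destruct (classic (a = b)) as [->|Hn]; [apply cle_refl|].
        rewrite (titer_succ f _ Hd).
        apply cle_trans with (@titer O L f (cbot L) d); [apply IHa, (proj2 Hd a (conj Hab Hn))|exact IHf].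
      * rewrite (titer_succ f _ Hd). apply fm, IHf.
    + assert (Hi : forall a, olt a b -> cle (@titer O L f (cbot L) a) (@titer O L f (cbot L) b)).
      { intros a Ha. rewrite (titer_lim f _ Hne Hnp). apply cinf_greatest.
        intros x [a0 [Ha0 ->]]. unfold tail_sup.
        destruct (wtotal a a0) as [h|h].
        - apply cle_trans with (@titer O L f (cbot L) a0).
          + apply (proj1 (IH a0 Ha0)), h.
          + apply csup_ub. exists a0, Ha0. split; [apply cle_refl|reflexivity].
        - apply csup_ub. exists a, Ha. split; [exact h|reflexivity]. }
      split.
      * intros a Hab. destruct (classic (a = b)) as [->|Hn]; [apply cle_refl|].
        apply Hi. split; assumption.
      * destruct Hne as [c Hc].
        have h1 : cle (@titer O L f (cbot L) b) (tail_sup f (cbot L) b c).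
        { rewrite (titer_lim f _ (ex_intro _ c Hc) Hnp). apply cinf_lb. exists c. split; auto. }
        apply cle_trans with (1 := h1). unfold tail_sup. apply csup_least.
        intros y [b' [hb' [_ ->]]].
        apply cle_trans with (f (@titer O L f (cbot L) b')).
        -- apply (proj2 (IH b' hb')).
        -- apply fm, Hi, hb'.
  - split.
    + intros a Hab. destruct (classic (a = b)) as [->|Hn]; [apply cle_refl|].
      exfalso. apply Hz. exists a. split; assumption.
    + rewrite (titer_zero f _ Hz). apply bot_le.
Qed.

Lemma titer_le_sup (O : wclat) (L : clat) (f : L -> L) (b : O) :
  ~ (exists d, is_pred d b) ->
  cle (@titer O L f (cbot L) b)
      (csup (fun y => exists c, olt c b /\ y = @titer O L f (cbot L) c)).
Proof.
  intro Hnp. destruct (classic (exists c, olt c b)) as [Hne|Hz].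
  - destruct Hne as [c Hc].
    rewrite (titer_lim f _ (ex_intro _ c Hc) Hnp).
    apply cle_trans with (tail_sup f (cbot L) b c).
    + apply cinf_lb. exists c. split; auto.
    + unfold tail_sup. apply csup_least. intros y [b' [hb' [_ ->]]].
      apply csup_ub. exists b'. split; auto.
  - rewrite (titer_zero f _ Hz). apply bot_le.
Qed.

Lemma liminf_mono_ev (O : wclat) (L : clat) (g h : O -> L) (lam a0 : O) :
  olt a0 lam -> (forall a, cle a0 a -> olt a lam -> cle (g a) (h a)) ->
  cle (liminf g lam) (liminf h lam).
Proof.
  intros Ha0 Hgh. unfold liminf at 1. apply csup_least.
  intros x [a1 [Ha1 ->]].
  assert (exists a2, olt a2 lam /\ cle a0 a2 /\ cle a1 a2) as [a2 [H2 [H02 H12]]].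
  { destruct (wtotal a0 a1) as [h'|h'].
    - exists a1. split; auto. split; auto. apply cle_refl.
    - exists a0. split; auto. split; auto. apply cle_refl. }
  apply cle_trans with (cinf (fun y => exists a, cle a2 a /\ olt a lam /\ y = h a)).
  - apply cinf_greatest. intros y [a [h1 [h2 ->]]].
    apply cle_trans with (g a).
    + apply cinf_lb. exists a. split; [apply cle_trans with a2; auto|split; auto].
    + apply Hgh; auto. apply cle_trans with a2; auto.
  - unfold liminf. apply csup_ub. exists a2. split; auto.
Qed.

Lemma liminf_le_bound (O : wclat) (phi : O -> O) (lam d : O) :
  (forall a, olt a lam -> cle (phi a) d) -> cle (liminf phi lam) d.
Proof.
  intro H. unfold liminf. apply csup_least. intros x [a0 [Ha0 ->]].
  apply cle_trans with (phi a0).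
  - apply cinf_lb. exists a0. split; [apply cle_refl|split; auto].
  - apply H, Ha0.
Qed.

Unset Implicit Arguments.
Theorem theorem4p18 (O : wclat) (n : nat) (Ls : 'I_n -> clat) (L : clat)
  (F : O -> (forall i, Ls i) -> L -> L)
  (Fmono : forall (a : O) (g : forall i, Ls i), monotone_map (F a g))
  (Fpull : liminf_pullable_all F)
  (phi : O -> O) (phimono : forall a b : O, cle a b -> cle (phi a) (phi b)) :
  (forall (lam : O) (Gs : forall i, O -> Ls i), is_nz_limit lam ->
     cle (mu (liminf phi lam) (F lam (fun i => liminf (Gs i) lam)))
         (liminf (fun a => mu (phi a) (F a (fun i => Gs i a))) lam))
  /\
  ((forall lam : O, is_nz_limit lam -> cle (phi lam) (liminf phi lam)) ->
   forall (lam : O) (Gs : forall i, O -> Ls i), is_nz_limit lam ->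
     cle (mu (phi lam) (F lam (fun i => liminf (Gs i) lam)))
         (liminf (fun a => mu (phi a) (F a (fun i => Gs i a))) lam)).
Proof.
  assert (Main : forall (lam : O) (Gs : forall i, O -> Ls i), is_nz_limit lam ->
     cle (mu (liminf phi lam) (F lam (fun i => liminf (Gs i) lam)))
         (liminf (fun a => mu (phi a) (F a (fun i => Gs i a))) lam)).
  { intros lam Gs Hlam. unfold mu.
    set (G := fun a => fun i => Gs i a).
    set (H := F lam (fun i => liminf (Gs i) lam)).
    destruct (proj1 Hlam) as [z Hzl].
    assert (P : forall g : O, cle (@titer O L H (cbot L) g)
                  (liminf (fun a => @titer O L (F a (G a)) (cbot L) g) lam)).
    { apply (well_founded_ind (@wwf O)). intros g IH.
      destruct (classic (exists d, is_pred d g)) as [[d Hd]|Hnp].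
      - rewrite (titer_succ H _ Hd).
        have -> : (fun a => @titer O L (F a (G a)) (cbot L) g)
                 = (fun a => F a (G a) (@titer O L (F a (G a)) (cbot L) d)).
        { apply functional_extensionality; intro a. apply titer_succ, Hd. }
        apply cle_trans with
          (H (liminf (fun a => @titer O L (F a (G a)) (cbot L) d) lam)).
        + apply Fmono, IH, (proj1 Hd).
        + exact (proj2 (Fpull G (fun a => @titer O L (F a (G a)) (cbot L) d) lam Hlam)).
      - apply cle_trans with (1 := titer_le_sup H Hnp).
        apply csup_least. intros y [c [Hc ->]].
        apply cle_trans with (1 := IH c Hc).
        apply (liminf_mono_ev Hzl). intros a _ _.
        apply (proj1 (titer_mono (Fmono a (G a)) g)), (proj1 Hc). }
    assert (A : forall g a0, olt a0 lam -> cle g (phi a0) ->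
               cle (@titer O L H (cbot L) g)
                   (liminf (fun a => @titer O L (F a (G a)) (cbot L) (phi a)) lam)).
    { intros g a0 Ha0 Hg. apply cle_trans with (1 := P g).
      apply (liminf_mono_ev Ha0). intros a Ha _.
      apply (proj1 (titer_mono (Fmono a (G a)) (phi a))).
      apply cle_trans with (phi a0); auto. }
    set (beta := liminf phi lam).
    destruct (classic (exists a0, olt a0 lam /\ cle beta (phi a0))) as [[a0 [Ha0 Hb]]|Hno].
    - exact (A _ _ Ha0 Hb).
    - assert (Hlt : forall a0, olt a0 lam -> olt (phi a0) beta).
      { intros a0 Ha0. destruct (wtotal beta (phi a0)) as [h|h].
        - exfalso. apply Hno. exists a0. auto.
        - split; auto. intro E. apply Hno. exists a0. split; auto. rewrite E. apply cle_refl. }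
      assert (Hnp : ~ exists d, is_pred d beta).
      { intros [d Hd]. assert (cle beta d).
        { apply liminf_le_bound. intros a Ha. apply (proj2 Hd), Hlt, Ha. }
        apply (proj2 (proj1 Hd)). apply cle_anti; auto. apply (proj1 (proj1 Hd)). }
      apply cle_trans with (1 := titer_le_sup H Hnp).
      apply csup_least. intros y [c [Hc ->]].
      destruct (classic (exists a0, olt a0 lam /\ cle c (phi a0))) as [[a0 [Ha0 Hc0]]|Hno2].
      + exact (A _ _ Ha0 Hc0).
      + exfalso. assert (cle beta c).
        { apply liminf_le_bound. intros a Ha. destruct (wtotal c (phi a)) as [h|h]; auto.
          exfalso. apply Hno2. exists a. auto. }
        apply (proj2 Hc). apply cle_anti; auto. apply (proj1 Hc). }
  split; [exact Main|].
  intros Hsc lam Gs Hlam.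
  apply cle_trans with (2 := Main lam Gs Hlam).
  unfold mu. apply (proj1 (titer_mono (Fmono lam _) _)). apply Hsc, Hlam.
Qed.
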